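(* Let $V,W$ be finite-dimensional Hermitian vector spaces, $\tilde W=V\oplus V\oplus W$, and $B_1,B_2\in\mathrm{End}(V)$, $i\in\mathrm{Hom}(W,V)$, $j\in\mathrm{Hom}(V,W)$. Define right $\mathfrak{M}^{\rm I}_q$-linear maps $\alpha_{\rm I}:V\otimes\mathfrak{M}^{\rm I}_q\to\tilde W\otimes\mathfrak{M}^{\rm I}_q$, $\beta_{\rm I}:\tilde W\otimes\mathfrak{M}^{\rm I}_q\to V\otimes\mathfrak{M}^{\rm I}_q$ by $$\alpha_{\rm I}=\begin{pmatrix}B_1\otimes 1-1\otimes x_{21'}\\ B_2\otimes1-1\otimes x_{22'}\\ j\otimes 1\end{pmatrix},\qquad \beta_{\rm I}=\begin{pmatrix}-B_2\otimes1+1\otimes x_{22'} & B_1\otimes1-1\otimes x_{21'} & i\otimes1\end{pmatrix},$$ and their adjoints $$\beta_{\rm I}^\dagger=\begin{pmatrix}-B_2^\dagger\otimes1+1\otimes x_{11'}\\ B_1^\dagger\otimes1+1\otimes x_{12'}\\ i^\dagger\otimes1\end{pmatrix},\qquad \alpha_{\rm I}^\dagger=\begin{pmatrix}B_1^\dagger\otimes1+1\otimes x_{12'} & B_2^\dagger\otimes1-1\otimes x_{11'} & j^\dagger\otimes1\end{pmatrix}.$$ Then (1) $\beta_{\rm I}\alpha_{\rm I}=0$ if and only if $[B_1,B_2]+ij=0$; (2) $\beta_{\rm I}\beta_{\rm I}^\dagger=\alpha_{\rm I}^\dagger\alpha_{\rm I}$ if and only if $[B_1,B_1^\dagger]+[B_2,B_2^\dagger]+ii^\dagger-j^\dagger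 j=0$.
   Context: $q$ is a nonzero complex (e.g. positive real) parameter. $\mathfrak{M}^{\rm I}_q$ is the algebra generated by $x_{11'},x_{12'},x_{21'},x_{22'}$ subject to $x_{11'}x_{12'}=x_{12'}x_{11'}$, $x_{21'}x_{22'}=x_{22'}x_{21'}$, $[x_{11'},x_{22'}]+[x_{21'},x_{12'}]=0$, $x_{11'}x_{21'}=q^{-2}x_{21'}x_{11'}$, $x_{12'}x_{22'}=q^{-2}x_{22'}x_{12'}$, $x_{21'}x_{12'}=q^2x_{12'}x_{21'}$ (realized inside $\widetilde{SL}(2)_q$ as $x_{11'}=\delta g_{11'}$, $x_{12'}=q^{-1/2}\delta g_{12'}$, $x_{21'}=q^{1/2}\delta g_{21'}$, $x_{22'}=\delta g_{22'}$). For a finite-dimensional vector space $U$, $U\otimes\mathfrak{M}^{\rm I}_q$ is a free right $\mathfrak{M}^{\rm I}_q$-module; for linear maps $A:U_1\to U_2$ and $x\in\mathfrak{M}^{\rm I}_q$, $A\otimes x$ denotes the right-linear map $v\otimes f\mapsto Av\otimes xf$. Block matrices act in the obvious way, and $\dagger$ on $B_k,i,j$ is the Hermitian adjoint. *)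

(* Defs.v *)
From HB Require Import structures.
From mathcomp Require Import all_boot all_order all_algebra.
Set Implicit Arguments. Unset Strict Implicit. Unset Printing Implicit Defensive.
Import GRing.Theory Num.Theory.
Local Open Scope ring_scope.

(* Conventions:
   - C : the complex scalars (any numClosedFieldType; e.g. complex numbers), with
     conjugation Num.conj.
   - A finite-dimensional Hermitian space of dimension n is identified (via an
     orthonormal basis) with C^n with the standard inner product; hence linear
     maps are matrices and the Hermitian adjoint is the conjugate transpose.
   - U (x) M, for M a C-algebra, is the free right M-module M^(dim U) (column
     vectors); a right M-linear map between such modules is a matrix over M acting
     by left multiplication, and composition is the matrix product over M.
   - A (x) x  is the right-linear map v (x) f |-> A v (x) x f, i.e. the matrix
     with entries A_kl *: x. *)

Definition dag (C : numClosedFieldType) p r (A : 'M[C]_(p, r)) : 'M[C]_(r, p) :=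
  (map_mx Num.conj A)^T.

Definition tensmx (C : numClosedFieldType) (M : algType C) p r
  (A : 'M[C]_(p, r)) (x : M) : 'M[M]_(p, r) := map_mx (fun a => a *: x) A.

Definition MIq_relations (C : numClosedFieldType) (M : algType C) (q : C)
  (x11 x12 x21 x22 : M) : Prop :=
  x11 * x12 = x12 * x11 /\
  x21 * x22 = x22 * x21 /\
  (x11 * x22 - x22 * x11) + (x21 * x12 - x12 * x21) = 0 /\
  x11 * x21 = q ^- 2 *: (x21 * x11) /\
  x12 * x22 = q ^- 2 *: (x22 * x12) /\
  x21 * x12 = q ^+ 2 *: (x12 * x21).

Section Maps.
Variables (C : numClosedFieldType) (M : algType C) (n m : nat).
Variables (x11 x12 x21 x22 : M).
Variables (B1 B2 : 'M[C]_n) (i : 'M[C]_(n, m)) (j : 'M[C]_(m, n)).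

Local Notation "A \ox x" := (tensmx A x) (at level 40).

Definition alphaI : 'M[M]_(n + n + m, n) :=
  col_mx (col_mx (B1 \ox 1 - 1%:M \ox x21) (B2 \ox 1 - 1%:M \ox x22)) (j \ox 1).

Definition betaI : 'M[M]_(n, n + n + m) :=
  row_mx (row_mx (- (B2 \ox 1) + 1%:M \ox x22) (B1 \ox 1 - 1%:M \ox x21)) (i \ox 1).

Definition betaI_dag : 'M[M]_(n + n + m, n) :=
  col_mx (col_mx (- (dag B2 \ox 1) + 1%:M \ox x11) (dag B1 \ox 1 + 1%:M \ox x12))
         (dag i \ox 1).

Definition alphaI_dag : 'M[M]_(n, n + n + m) :=
  row_mx (row_mx (dag B1 \ox 1 + 1%:M \ox x12) (dag B2 \ox 1 - 1%:M \ox x11))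
         (dag j \ox 1).

End Maps.

(* Main.v *)
Require Import Defs.
From HB Require Import structures.
From mathcomp Require Import all_boot all_order all_algebra.
Import GRing.Theory Num.Theory.
Local Open Scope ring_scope.

Lemma tensmx_mul (C : numClosedFieldType) (M : algType C) p r s
  (A : 'M[C]_(p, r)) (B : 'M[C]_(r, s)) (x y : M) :
  tensmx A x *m tensmx B y = tensmx (A *m B) (x * y).
Proof.
apply/matrixP=> a b; rewrite !mxE scaler_suml; apply: eq_bigr => k _.
by rewrite !mxE -scalerAl -scalerAr scalerA.
Qed.

Lemma tensmx_inj1 (C : numClosedFieldType) (M : algType C) p r
  (A : 'M[C]_(p, r)) : tensmx A (1 : M) = 0 <-> A = 0.
Proof.
split=> [h|->]; last by apply/matrixP=> a b; rewrite !mxE scale0r.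
apply/matrixP=> a b; move/matrixP: h => /(_ a b); rewrite !mxE => /eqP.
by rewrite scaler_eq0 oner_eq0 orbF => /eqP.
Qed.

Lemma tensmxDl (C : numClosedFieldType) (M : algType C) p r
  (A B : 'M[C]_(p, r)) (x : M) : tensmx (A + B) x = tensmx A x + tensmx B x.
Proof. by apply/matrixP=> a b; rewrite !mxE scalerDl. Qed.
Lemma tensmxNl (C : numClosedFieldType) (M : algType C) p r
  (A : 'M[C]_(p, r)) (x : M) : tensmx (- A) x = - tensmx A x.
Proof. by apply/matrixP=> a b; rewrite !mxE scaleNr. Qed.
Lemma tensmxDr (C : numClosedFieldType) (M : algType C) p r
  (A : 'M[C]_(p, r)) (x y : M) : tensmx A (x + y) = tensmx A x + tensmx A y.
Proof. by apply/matrixP=> a b; rewrite !mxE scalerDr. Qed.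
Lemma tensmxNr (C : numClosedFieldType) (M : algType C) p r
  (A : 'M[C]_(p, r)) (x : M) : tensmx A (- x) = - tensmx A x.
Proof. by apply/matrixP=> a b; rewrite !mxE scalerN. Qed.

Lemma canc_aux (V : zmodType) (a u : V) : a = 0 -> a + u = u.
Proof. by move->; rewrite add0r. Qed.

Ltac canc :=
  rewrite ?add0r; match goal with
  | |- 0 = 0 => reflexivity
  | |- ?S + ?t = 0 =>
      apply/eqP; rewrite addr_eq0; apply/eqP; rewrite ?opprK;
      match goal with |- _ = ?u =>
        rewrite -[LHS]add0r ?addrA; repeat progress rewrite (addrAC _ u);
        apply: canc_aux; canc
      end
  end.


Theorem proposition3p8 (C : numClosedFieldType) (q : C) (hq : q != 0)
  (M : algType C) (x11 x12 x21 x22 : M)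
  (hrel : MIq_relations q x11 x12 x21 x22)
  (n m : nat) (B1 B2 : 'M[C]_n) (i : 'M[C]_(n, m)) (j : 'M[C]_(m, n)) :
  (betaI x21 x22 B1 B2 i *m alphaI x21 x22 B1 B2 j = 0
     <-> B1 *m B2 - B2 *m B1 + i *m j = 0)
  /\
  (betaI x21 x22 B1 B2 i *m betaI_dag x11 x12 B1 B2 i
     = alphaI_dag x11 x12 B1 B2 j *m alphaI x21 x22 B1 B2 j
     <-> (B1 *m dag B1 - dag B1 *m B1) + (B2 *m dag B2 - dag B2 *m B2)
           + i *m dag i - dag j *m j = 0).
Proof.
case: hrel => _ [h2 [h3 _]].
split.
  have -> : betaI x21 x22 B1 B2 i *m alphaI x21 x22 B1 B2 j
      = tensmx (B1 *m B2 - B2 *m B1 + i *m j) 1.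
    apply/eqP; rewrite -subr_eq0; apply/eqP.
    rewrite /betaI /alphaI !mul_row_col !mulmxDl !mulmxDr !mulNmx !mulmxN.
    rewrite !tensmx_mul !mul1mx !mulmx1 !mul1r !mulr1 !tensmxDl !tensmxNl h2.
    rewrite !opprD !opprK !addrA.
    canc.
  exact: tensmx_inj1.
have h3' : x11 * x22 = x22 * x11 - x21 * x12 + x12 * x21.
  by apply/eqP; rewrite -subr_eq0; apply/eqP; rewrite -h3 !opprD !opprK !addrA.
set K := (B1 *m dag B1 - dag B1 *m B1) + (B2 *m dag B2 - dag B2 *m B2)
           + i *m dag i - dag j *m j.
have E : betaI x21 x22 B1 B2 i *m betaI_dag x11 x12 B1 B2 i
     - alphaI_dag x11 x12 B1 B2 j *m alphaI x21 x22 B1 B2 j = tensmx K 1.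
  apply/eqP; rewrite -subr_eq0; apply/eqP.
  rewrite /K /betaI /alphaI /betaI_dag /alphaI_dag !mul_row_col !mulmxDl !mulmxDr !mulNmx !mulmxN.
  rewrite !tensmx_mul !mul1mx !mulmx1 !mul1r !mulr1 !tensmxDl !tensmxNl h3'.
  rewrite !tensmxDr !tensmxNr.
  rewrite !opprD !opprK !addrA.
  canc.
split=> h.
  by apply/(@tensmx_inj1 _ M); rewrite -E h subrr.
apply/eqP; rewrite -subr_eq0 E h; apply/eqP; exact/tensmx_inj1.
Qed.
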